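(* Let $\mathcal{L}$ be a triangulation of a closed 3-manifold $\mathcal{M}^3$ with a branching structure, and consider three copies $i=1,2,3$ of the $\mathbb{Z}_2$ toric code on $\mathcal{L}$ as described in the context. Define the constant-depth circuit $$U=\prod_{[v_0v_1v_2v_3]\in\mathcal{L}}\mathrm{CCZ}\big(q^{(1)}_{[v_0v_1]},\,q^{(2)}_{[v_1v_2]},\,q^{(3)}_{[v_2v_3]}\big)=(-1)^{\int_{\mathcal{L}}a^{(1)}\cup a^{(2)}\cup a^{(3)}},$$ the product over all 3-simplices with $v_0\prec v_1\prec v_2\prec v_3$. Then $U$ preserves the code space, and on the code space $$U=\prod_{\alpha^1,\beta^1,\gamma^1\in B^1}\overline{\mathrm{CCZ}}\big[(\alpha^1;1),(\beta^1;2),(\gamma^1;3)\big]^{\int_{\mathcal{M}^3}\alpha^1\cup\beta^1\cup\gamma^1},$$ i.e. a logical CCZ acts on $(\alpha^1;1),(\beta^1;2),(\gamma^1;3)$ exactly when the Poincaré-dual 2-cycles have $\mathbb{Z}_2$ triple intersection number $1$.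
   Context: Branching structure: an ordering $v_0\prec v_1\prec\cdots$ of the vertices of each simplex, consistent on shared faces. Toric code copy $i$: one qubit $q^{(i)}_e$ per edge $e$; $X$-stabilizers $\prod_{e\ni v}X^{(i)}_e$ for each vertex $v$; $Z$-stabilizers $\prod_{e\subset f}Z^{(i)}_e$ for each triangle $f$. The operator-valued 1-cochain $a^{(i)}$ with values in $\{0,1\}$ is defined by $(-1)^{a^{(i)}(e)}=Z^{(i)}_e$; the cup product of cochains on an ordered simplex is $(\alpha^p\cup\beta^q)([v_0\cdots v_{p+q}])=\alpha^p([v_0\cdots v_p])\beta^q([v_p\cdots v_{p+q}])$, and $\int_{\mathcal{L}}$ is the sum over all 3-simplices mod 2. On the code space $da^{(i)}=0$, and the class of $a^{(i)}$ in $H^1(\mathcal{M}^3;\mathbb{Z}_2)$ is measured by logical $Z$ operators. Fix a basis $B^1$ of $H^1(\mathcal{M}^3;\mathbb{Z}_2)$; writing $[a^{(1)}]=\sum_\alpha n_\alpha\alpha^1$, $[a^{(2)}]=\sum_\beta m_\beta\beta^1$, $[a^{(3)}]=\sum_\gamma l_\gamma\gamma^1$ with $n_\alpha,m_\beta,l_\gamma\in\{0,1\}$, the logical qubit $(\alpha^1;1)$ has logical computational basis value $n_\alpha$ (similarly for $(\beta^1;2),(\gamma^1;3)$), and $\overline{\mathrm{CCZ}}[(\alpha^1;1),(\beta^1;2),(\gamma^1;3)]$ acts as $(-1)^{n_\alpha m_\beta l_\gamma}$. *)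

(* Defs.v *)
(* Quantum states are functions from the
   computational (Z-) basis configurations of all qubits to algC (complex
   algebraic numbers); operators are maps on such functions. *)
From HB Require Import structures.
From mathcomp Require Import all_boot all_order all_algebra.
From mathcomp Require Import algC.
Set Implicit Arguments. Unset Strict Implicit. Unset Printing Implicit Defensive.
Import Order.TTheory GRing.Theory Num.Theory.

Section Defs.
Variable V : finType.

Definition simplices (F : {set {set V}}) : {set {set V}} :=
  [set s | (s != set0) && [exists t in F, s \subset t]].
(* the faces with k vertices (k = dimension + 1) *)
Definition skel (F : {set {set V}}) (k : nat) : {set {set V}} :=
  [set s in simplices F | #|s| == k].

Definition euler2 (F : {set {set V}}) : int :=
  (#|skel F 1|%:Z - #|skel F 2|%:Z + #|skel F 3|%:Z)%R.

Definition adj1 (F : {set {set V}}) : rel V := fun a b => [set a; b] \in skel F 2.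

Definition lkadj (F : {set {set V}}) (w : V) : rel V :=
  fun a b => [set w; a; b] \in skel F 3.

(* F (a set of triangles) generates a combinatorial 2-sphere: a connected
   closed surface (every edge in exactly two triangles, every vertex link a
   connected cycle) of Euler characteristic 2. *)
Definition is_sphere2 (F : {set {set V}}) : bool :=
  [&& [forall t in F, #|t| == 3],
      [forall e in skel F 2, #|[set t in F | e \subset t]| == 2],
      [forall w, ([set w] \in skel F 1) ==>
         [forall a, forall b,
            (adj1 F w a && adj1 F w b) ==> connect (lkadj F w) a b]],
      [forall a, forall b,
         (([set a] \in skel F 1) && ([set b] \in skel F 1)) ==> connect (adj1 F) a b]
    & euler2 F == 2%R].

Definition link_tris (T : {set {set V}}) (v : V) : {set {set V}} :=
  [set t :\ v | t in T & v \in t].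

(* T is (the set of 3-simplices of) a triangulation of a closed 3-manifold:
   a finite pure 3-dimensional simplicial complex in which the link of every
   vertex is a combinatorial 2-sphere. *)
Definition closed3manifold (T : {set {set V}}) : bool :=
  [forall t in T, #|t| == 4] &&
  [forall v, ([set v] \in skel T 1) ==> is_sphere2 (link_tris T v)].

(* o u w means u precedes w; on every edge exactly one orientation, and no
   triangle carries a directed 3-cycle, i.e. o restricts to a total order on
   every simplex, consistently on shared faces. *)
Definition branching (T : {set {set V}}) (o : rel V) : bool :=
  [forall e in skel T 2, forall u in e, forall w in e,
     (u != w) ==> (o u w != o w u)] &&
  [forall f in skel T 3, forall a in f, forall b in f, forall c in f,
     [&& a != b, b != c & a != c] ==> ~~ [&& o a b, o b c & o c a]].

(* position of v among the vertices of s (0-based) *)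
Definition rankv (o : rel V) (s : {set V}) (v : V) : nat :=
  #|[set w in s | (w != v) && o w v]|.
Definition vtx (o : rel V) (s : {set V}) (k : nat) : option V :=
  [pick v in s | rankv o s v == k].
Definition face (o : rel V) (s : {set V}) (ks : seq nat) : {set V} :=
  [set v | Some v \in map (vtx o s) ks].

Definition cochain := {set V} -> bool.
Definition cup (o : rel V) (p q : nat) (a b : cochain) : cochain :=
  fun s => a (face o s (iota 0 p.+1)) && b (face o s (iota p q.+1)).
Definition cup3 (o : rel V) (a b c : cochain) : cochain :=
  cup o 2 1 (cup o 1 1 a b) c.
Definition integral (T : {set {set V}}) (c : cochain) : bool :=
  \big[addb/false]_(t in T) c t.

Definition Edge (T : {set {set V}}) := {e : {set V} | e \in skel T 2}.
Definition copy := 'I_3.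
Definition c1 : copy := @Ordinal 3 0 isT.
Definition c2 : copy := @Ordinal 3 1 isT.
Definition c3 : copy := @Ordinal 3 2 isT.

(* a computational basis configuration: x i e = value of q^(i)_e, with
   (-1)^(x i e) = Z^(i)_e, i.e. x i is the cochain a^(i) *)
Definition config (T : {set {set V}}) := {ffun copy -> {ffun Edge T -> bool}}.
Definition state (T : {set {set V}}) := config T -> algC.

(* extension of an edge-valued function to a cochain (zero off edges) *)
Definition ext (T : {set {set V}}) (x : {ffun Edge T -> bool}) : cochain :=
  fun s => if (insub s : option (Edge T)) is Some e then x e else false.

Definition delta1 (T : {set {set V}}) (c : cochain) (f : {set V}) : bool :=
  \big[addb/false]_(e in skel T 2 | e \subset f) c e.

Definition flip (T : {set {set V}}) (x : config T) (i : copy) (v : V) : config T :=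
  [ffun j => if j == i then [ffun e : Edge T => x j e (+) (v \in val e)] else x j].
Definition Xstab (T : {set {set V}}) (i : copy) (v : V) (psi : state T) : state T :=
  fun x => psi (flip x i v).
Definition Zstab (T : {set {set V}}) (i : copy) (f : {set V}) (psi : state T) : state T :=
  fun x => ((-1) ^+ delta1 T (ext (x i)) f * psi x)%R.
Definition in_code (T : {set {set V}}) (psi : state T) : Prop :=
  (forall i v, [set v] \in skel T 1 -> forall x, Xstab i v psi x = psi x) /\
  (forall i f, f \in skel T 3 -> forall x, Zstab i f psi x = psi x).

Definition CCZ (T : {set {set V}}) (q1 q2 q3 : copy * Edge T) (psi : state T) : state T :=
  fun x => ((-1) ^+ [&& x q1.1 q1.2, x q2.1 q2.2 & x q3.1 q3.2] * psi x)%R.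
Definition tet_gate (T : {set {set V}}) (o : rel V) (t : {set V}) (psi : state T) : state T :=
  match (insub (face o t [:: 0; 1]) : option (Edge T)),
        (insub (face o t [:: 1; 2]) : option (Edge T)),
        (insub (face o t [:: 2; 3]) : option (Edge T)) with
  | Some e1, Some e2, Some e3 => CCZ (c1, e1) (c2, e2) (c3, e3) psi
  | _, _, _ => psi
  end.
Definition Ucirc (T : {set {set V}}) (o : rel V) (psi : state T) : state T :=
  foldr (fun t acc => tet_gate o t acc) psi (enum T).

Definition cocycle (T : {set {set V}}) (c : {ffun Edge T -> bool}) : bool :=
  [forall f in skel T 3, ~~ delta1 T (ext c) f].
Definition cohomologous (T : {set {set V}}) (c c' : {ffun Edge T -> bool}) : bool :=
  [exists g : {ffun V -> bool},
     [forall e : Edge T, (c e (+) c' e) == \big[addb/false]_(v in val e) g v]].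
Definition lincomb (T : {set {set V}}) (nb : nat) (B : 'I_nb -> {ffun Edge T -> bool})
    (n : {ffun 'I_nb -> bool}) : {ffun Edge T -> bool} :=
  [ffun e => \big[addb/false]_(k < nb) (n k && B k e)].
Definition H1basis (T : {set {set V}}) (nb : nat) (B : 'I_nb -> {ffun Edge T -> bool}) : Prop :=
  (forall k, cocycle (B k)) /\
  (forall c, cocycle c -> exists! n : {ffun 'I_nb -> bool}, cohomologous c (lincomb B n)).
Definition coord (T : {set {set V}}) (nb : nat) (B : 'I_nb -> {ffun Edge T -> bool})
    (c : {ffun Edge T -> bool}) : {ffun 'I_nb -> bool} :=
  odflt [ffun => false] [pick n : {ffun 'I_nb -> bool} | cohomologous c (lincomb B n)].

Definition LCCZ (T : {set {set V}}) (nb : nat) (B : 'I_nb -> {ffun Edge T -> bool})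
    (abg : 'I_nb * 'I_nb * 'I_nb) (psi : state T) : state T :=
  fun x => ((-1) ^+ [&& coord B (x c1) abg.1.1, coord B (x c2) abg.1.2
                     & coord B (x c3) abg.2] * psi x)%R.
Definition triple (T : {set {set V}}) (o : rel V) (nb : nat)
    (B : 'I_nb -> {ffun Edge T -> bool}) (abg : 'I_nb * 'I_nb * 'I_nb) : bool :=
  integral T (cup3 o (ext (B abg.1.1)) (ext (B abg.1.2)) (ext (B abg.2))).
Definition Lprod (T : {set {set V}}) (o : rel V) (nb : nat)
    (B : 'I_nb -> {ffun Edge T -> bool}) (psi : state T) : state T :=
  foldr (fun abg acc => iter (triple o B abg) (LCCZ B abg) acc) psi
        (enum {: 'I_nb * 'I_nb * 'I_nb}).

End Defs.

(* Main.v *)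
Require Import Defs.
From HB Require Import structures.
From mathcomp Require Import all_boot all_order all_algebra.
From mathcomp Require Import zify.
From mathcomp Require Import algC.
Import GRing.Theory Num.Theory.
Set Implicit Arguments. Unset Strict Implicit. Unset Printing Implicit Defensive.

Section Sub.
Variable V : finType.
Implicit Types (T : {set {set V}}) (o : rel V).

Lemma eqSome (x y : V) : (Some x == Some y) = (x == y).
Proof. by []. Qed.

Lemma rank_list o (l : seq V) (s : {set V}) v : uniq l -> s =i l ->
  rankv o s v = \sum_(w <- l) ((w != v) && o w v).
Proof.
move=> ul sl; rewrite /rankv -sum1_card.
rewrite (eq_bigl (fun w => (w \in s) && ((w != v) && o w v))); last by move=> w; rewrite inE.
rewrite big_mkcondr (eq_bigl (mem l)) // -big_uniq //.
Qed.

Lemma vtx_list o (l : seq V) (s : {set V}) k x0 : uniq l -> s =i l ->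
  map (rankv o s) l = iota 0 (size l) -> k < size l -> vtx o s k = Some (nth x0 l k).
Proof.
move=> ul sl ml kl.
have rk j : j < size l -> rankv o s (nth x0 l j) = j.
  move=> jl; have := congr1 (fun m => nth 0 m j) ml => /=.
  by rewrite (nth_map x0) // nth_iota.
rewrite /vtx; case: pickP => [w /andP[ws /eqP rw] | none].
  have wl : w \in l by rewrite -sl.
  have := rk (index w l); rewrite index_mem nth_index // => /(_ wl) e.
  by rewrite -rw e nth_index.
by have := none (nth x0 l k); rewrite sl mem_nth //= rk // eqxx.
Qed.
Definition ltr o (u w : V) := [&& u != w, o u w & ~~ o w u].

Lemma ltr_facts o u w : ltr o u w ->
  [/\ (u == w) = false, (w == u) = false, o u w = true & o w u = false].
Proof. by case/and3P=> /negbTE d -> /negbTE ->; split; rewrite // eq_sym d. Qed.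

Lemma face2 o s (i j : nat) a b : vtx o s i = Some a -> vtx o s j = Some b ->
  face o s [:: i; j] = [set a; b].
Proof. by move=> hi hj; apply/setP=> x; rewrite /face !inE hi hj. Qed.

Lemma face3 o s (i j k : nat) a b c : vtx o s i = Some a -> vtx o s j = Some b ->
  vtx o s k = Some c -> face o s [:: i; j; k] = [set a; b; c].
Proof. by move=> hi hj hk; apply/setP=> x; rewrite /face !inE hi hj hk !orbA. Qed.

Section Tri.
Variables (o : rel V) (a b c : V).
Hypotheses (hab : ltr o a b) (hbc : ltr o b c) (hac : ltr o a c).

Lemma tri_vtx k : k < 3 -> vtx o [set a; b; c] k = Some (nth a [:: a; b; c] k).
Proof.
have [e1 f1 g1 h1] := ltr_facts hab; have [e2 f2 g2 h2] := ltr_facts hbc.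
have [e3 f3 g3 h3] := ltr_facts hac.
have ul : uniq [:: a; b; c] by rewrite /= !inE e1 e2 e3.
have sl : [set a; b; c] =i [:: a; b; c] by move=> x; rewrite !inE orbA.
move=> klt; apply: vtx_list => //.
by rewrite /= !(rank_list _ _ ul sl) !big_cons !big_nil !eqxx ?e1 ?f1 ?g1 ?h1 ?e2 ?f2 ?g2 ?h2 ?e3 ?f3 ?g3 ?h3.
Qed.

Lemma tri_face01 : face o [set a; b; c] [:: 0; 1] = [set a; b].
Proof. by apply: face2; apply: tri_vtx. Qed.
Lemma tri_face12 : face o [set a; b; c] [:: 1; 2] = [set b; c].
Proof. by apply: face2; apply: tri_vtx. Qed.
End Tri.

Section Tet.
Variables (o : rel V) (w0 w1 w2 w3 : V).
Hypotheses (h01 : ltr o w0 w1) (h02 : ltr o w0 w2) (h03 : ltr o w0 w3)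
  (h12 : ltr o w1 w2) (h13 : ltr o w1 w3) (h23 : ltr o w2 w3).

Lemma tet_vtx k : k < 4 -> vtx o [set w0; w1; w2; w3] k = Some (nth w0 [:: w0; w1; w2; w3] k).
Proof.
have [e1 f1 g1 k1] := ltr_facts h01; have [e2 f2 g2 k2] := ltr_facts h02.
have [e3 f3 g3 k3] := ltr_facts h03; have [e4 f4 g4 k4] := ltr_facts h12.
have [e5 f5 g5 k5] := ltr_facts h13; have [e6 f6 g6 k6] := ltr_facts h23.
have ul : uniq [:: w0; w1; w2; w3] by rewrite /= !inE e1 e2 e3 e4 e5 e6.
have sl : [set w0; w1; w2; w3] =i [:: w0; w1; w2; w3] by move=> x; rewrite !inE !orbA.
move=> klt; apply: vtx_list => //.
by rewrite /= !(rank_list _ _ ul sl) !big_cons !big_nil !eqxx ?e1 ?f1 ?g1 ?k1 ?e2 ?f2 ?g2 ?k2 ?e3 ?f3 ?g3 ?k3 ?e4 ?f4 ?g4 ?k4 ?e5 ?f5 ?g5 ?k5 ?e6 ?f6 ?g6 ?k6.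
Qed.

Lemma tet_face01 : face o [set w0; w1; w2; w3] [:: 0; 1] = [set w0; w1].
Proof. by apply: face2; apply: tet_vtx. Qed.
Lemma tet_face12 : face o [set w0; w1; w2; w3] [:: 1; 2] = [set w1; w2].
Proof. by apply: face2; apply: tet_vtx. Qed.
Lemma tet_face23 : face o [set w0; w1; w2; w3] [:: 2; 3] = [set w2; w3].
Proof. by apply: face2; apply: tet_vtx. Qed.
Lemma tet_face012 : face o [set w0; w1; w2; w3] [:: 0; 1; 2] = [set w0; w1; w2].
Proof. by apply: face3; apply: tet_vtx. Qed.

Lemma tet_cup3 (x y z : cochain V) :
  cup3 o x y z [set w0; w1; w2; w3] = [&& x [set w0; w1], y [set w1; w2] & z [set w2; w3]].
Proof.
rewrite /cup3 /cup /= tet_face012 tet_face23 tri_face01 // tri_face12 //.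
by rewrite andbA.
Qed.
End Tet.
End Sub.

Section SubA.
Variable V : finType.
Implicit Types (T : {set {set V}}) (o : rel V).

Lemma skelP T k s : reflect (s != set0 /\ (exists2 t, t \in T & s \subset t) /\ #|s| = k)
   (s \in skel T k).
Proof.
rewrite /skel /simplices !inE.
apply: (iffP idP).
  by case/andP=> /andP[-> /existsP[t /andP[tT st]]] /eqP ->; split=> //; split=> //; exists t.
case=> -> [[t tT st] ->]; rewrite eqxx andbT /=; apply/existsP; exists t; by rewrite tT.
Qed.

Lemma cards3 (a b c : V) : a != b -> b != c -> a != c -> #|[set a; b; c]| = 3.
Proof. by move=> ab bc ac; rewrite -setUA cardsU1 cards2 !inE bc negb_or ab ac. Qed.


Lemma tet_order T o : closed3manifold T -> branching T o -> forall t, t \in T ->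
  exists w0 w1 w2 w3, t = [set w0; w1; w2; w3] /\
    [&& ltr o w0 w1, ltr o w0 w2, ltr o w0 w3, ltr o w1 w2, ltr o w1 w3 & ltr o w2 w3].
Proof.
move=> /andP[/forallP hT _] /andP[/forallP hE /forallP hF] t tT.
have c4 : #|t| = 4 by apply/eqP; exact: (implyP (hT t) tT).
have edge u w : u \in t -> w \in t -> u != w -> o u w != o w u.
  move=> ut wt uw.
  have e2 : [set u; w] \in skel T 2.
    apply/skelP; split; first by apply/set0Pn; exists u; rewrite !inE eqxx.
    split; last by rewrite cards2 uw.
    exists t => //; by rewrite subUset !sub1set ut wt.
  have := implyP (hE _) e2 => /forallP /(_ u) /implyP; rewrite !inE eqxx /= => /(_ isT).
  move=> /forallP /(_ w) /implyP; rewrite !inE eqxx orbT => /(_ isT) /implyP; exact.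
have tri a b c : a \in t -> b \in t -> c \in t -> a != b -> b != c -> a != c ->
    ~~ [&& o a b, o b c & o c a].
  move=> a_t bt ct ab bc ac.
  have f3 : [set a; b; c] \in skel T 3.
    apply/skelP; split; first by apply/set0Pn; exists a; rewrite !inE eqxx.
    split; last by rewrite cards3.
    exists t => //; by rewrite !subUset !sub1set a_t bt ct.
  have := implyP (hF _) f3 => /forallP /(_ a) /implyP; rewrite !inE eqxx /= => /(_ isT).
  move=> /forallP /(_ b) /implyP; rewrite !inE eqxx /= orbT => /(_ isT).
  move=> /forallP /(_ c) /implyP; rewrite !inE eqxx /= orbT => /(_ isT) /implyP; apply.
  by rewrite ab bc ac.
pose le u w := (u == w) || ltr o u w.
have tot : {in mem t &, total le}.
  move=> u w ut wt; rewrite /le /ltr; case: (eqVneq u w) => [->|uw] /=; first by rewrite ?eqxx.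
  idtac.
  rewrite ?eq_sym ?uw /=; have := edge u w ut wt uw.
  by case: (o u w); case: (o w u).
have tr : {in mem t & &, transitive le}.
  move=> b a c bt a_t ct; rewrite /le.
  case: (eqVneq a b) => [->|ab]; first by move=> _.
  case: (eqVneq b c) => [<-|bc]; first by move=> /= ->; rewrite orbT.
  rewrite /ltr ab bc /= => /andP[oab noba] /andP[obc nocb].
  case: (eqVneq a c) => [eac|ac] /=; first by subst; rewrite oab in nocb.
  have := tri a b c a_t bt ct ab bc ac; rewrite oab obc /= => noca.
  have := edge a c a_t ct ac; rewrite (negbTE noca).
  by case: (o a c).
set s := sort le (enum t).
have ss : sorted le s by apply: (sort_sorted_in tot); apply/allP=> x; rewrite mem_enum.
have alls : all (mem t) s by apply/allP=> x; rewrite mem_sort mem_enum.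
have ps : pairwise le s by rewrite -(sorted_pairwise_in tr alls).
have us : uniq s by rewrite sort_uniq enum_uniq.
have sz : size s = 4 by rewrite size_sort -cardE.
have mems : t =i s by move=> x; rewrite mem_sort mem_enum.
clear ss alls; move: sz ps us mems; case: s => [|w0 [|w1 [|w2 [|w3 [|? ?]]]]] //= _.
rewrite !andbT !inE !negb_or => /and3P[/and3P[h01 h02 h03] /andP[h12 h13] h23] /and3P[/and3P[n01 n02 n03] /andP[n12 n13] n23] mems.
exists w0, w1, w2, w3; split.
  by apply/setP=> x; rewrite mems !inE -!orbA.
have lt_of u w : u != w -> le u w -> ltr o u w by move=> /negbTE uw; rewrite /le uw.
by rewrite !lt_of.
Qed.
End SubA.

Section Closed.
Variable V : finType.
Variable T : {set {set V}}.
Hypothesis hM : closed3manifold T.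

Lemma iter_addb n b : iter n (addb b) false = b && odd n.
Proof. elim: n => [|n IH] /=; first by rewrite andbF. by rewrite IH; clear IH; case: (odd n); case: b. Qed.

Lemma card4 t : t \in T -> #|t| = 4.
Proof. by case/andP: hM => /forallP h _ tT; apply/eqP; exact: (implyP (h t) tT). Qed.

Lemma two_tets (f t0 : {set V}) : t0 \in T -> f \subset t0 -> #|f| = 3 ->
  #|[set t in T | f \subset t]| = 2.
Proof.
move=> t0T ft0 cf.
have [a af] : exists a, a \in f by apply/card_gt0P; rewrite cf.
have at0 : a \in t0 by apply: (subsetP ft0).
set e := f :\ a.
set L := link_tris T a.
have v1 : [set a] \in skel T 1.
  rewrite /skel /simplices !inE cards1 eqxx andbT.
  apply/andP; split; first by apply/set0Pn; exists a; rewrite inE.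
  by apply/existsP; exists t0; rewrite t0T sub1set.
have sph : is_sphere2 L by case/andP: hM => _ /forallP /(_ a) /implyP; apply.
have t0L : t0 :\ a \in L by apply/imsetP; exists t0; rewrite // inE t0T.
have eL : e \in skel L 2.
  rewrite /skel /simplices !inE.
  have ce : #|e| = 2 by have := cardsD1 a f; rewrite af cf; case.
  rewrite ce eqxx andbT; apply/andP; split.
    by apply/set0Pn/card_gt0P; rewrite ce.
  by apply/existsP; exists (t0 :\ a); rewrite t0L setSD.
have := sph; case/and5P => _ /forallP /(_ e) /implyP /(_ eL) /eqP <- _ _ _.
have inj : {in [set t in T | f \subset t] &, injective (fun t => t :\ a)}.
  move=> t t' /[!inE] /andP[_ ft] /andP[_ ft'] eq.
  by rewrite -(setD1K (subsetP ft a af)) -(setD1K (subsetP ft' a af)) eq.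
rewrite -(card_in_imset inj); apply: eq_card => t'; rewrite [in RHS]inE.
apply/imsetP/andP.
  case=> t /[!inE] /andP[tT ft] ->; split.
    by apply/imsetP; exists t; rewrite // inE tT (subsetP ft a af).
  exact: setSD.
case=> /imsetP [t /[!inE] /andP[tT a_t] ->] et; exists t => //.
rewrite inE tT /=; apply/subsetP=> y yf.
case: (eqVneq y a) => [->//|ya].
have : y \in e by rewrite !inE ya.
by move/(subsetP et); rewrite inE => /andP[].
Qed.

Lemma closed_sum (w : {set V} -> bool) :
  \big[addb/false]_(t in T) \big[addb/false]_(x in t) w (t :\ x) = false.
Proof.
have step t : t \in T -> \big[addb/false]_(x in t) w (t :\ x) =
    \big[addb/false]_(f : {set V} | (f \subset t) && (#|f| == 3)) w f.
  move=> tT.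
  have inj : {in t &, injective (fun x => t :\ x)}.
    move=> x y xt yt /setP /(_ x); rewrite !inE eqxx /= xt andbT.
    by case: (eqVneq x y) => // _ /esym /negbT; rewrite negbK.
  rewrite -(big_imset _ inj); apply: eq_bigl => f.
  apply/imsetP/andP.
    case=> x xt ->; split; first exact: subD1set.
    by have := cardsD1 x t; rewrite xt card4 //= => h; apply/eqP; lia.
  case=> ft /eqP cf.
  have : #|t :\: f| = 1 by rewrite cardsD (setIidPr ft) (card4 tT) cf.
  move/eqP/cards1P=> [x ex]; exists x.
    have : x \in t :\: f by rewrite ex inE.
    by rewrite inE => /andP[].
  by rewrite -ex setDDr setDv set0U; apply/esym/setIidPr.
rewrite (eq_bigr _ step).
rewrite (exchange_big_dep (fun f : {set V} => #|f| == 3)); last by move=> t f _ /andP[].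
apply: big1 => f /eqP cf.
rewrite (eq_bigl (mem [set t in T | f \subset t])); last by move=> t; rewrite !inE cf eqxx andbT.
rewrite big_const iter_addb.
case: (pickP [pred t in T | f \subset t]) => [t0 /andP[t0T ft0] | none].
  by rewrite (two_tets t0T ft0 cf) andbF.
have -> : [set t in T | f \subset t] = set0.
  by apply/setP=> t; rewrite !inE; have := none t; rewrite /= => ->.
by rewrite cards0 andbF.
Qed.
End Closed.

Section Main.
Variable V : finType.
Variable T : {set {set V}}.
Variable o : rel V.
Hypothesis hM : closed3manifold T.
Hypothesis hbr : branching T o.

Definition addf (a a' : {ffun Edge T -> bool}) : {ffun Edge T -> bool} :=
  [ffun e => a e (+) a' e].
Definition cob (g : V -> bool) : {ffun Edge T -> bool} :=
  [ffun e : Edge T => \big[addb/false]_(v in val e) g v].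
Definition F (a b c : {ffun Edge T -> bool}) : bool :=
  integral T (cup3 o (ext a) (ext b) (ext c)).

Lemma ext_add a a' s : ext (addf a a') s = ext a s (+) ext a' s.
Proof. by rewrite /ext; case: insub => //= e; rewrite ffunE. Qed.

Lemma sum_list (A : {set V}) (l : seq V) (h : V -> bool) : uniq l -> A =i l ->
  \big[addb/false]_(v in A) h v = \big[addb/false]_(v <- l) h v.
Proof. by move=> ul Al; rewrite big_uniq //; apply: eq_bigl. Qed.

Lemma skel_sub (s t : {set V}) k : t \in T -> s \subset t -> s != set0 -> #|s| = k ->
  s \in skel T k.
Proof.
move=> tT st s0 cs; rewrite /skel /simplices !inE s0 cs eqxx andbT /=.
by apply/existsP; exists t; rewrite tT.
Qed.

Lemma skel_up (s : {set V}) k : s \in skel T k -> exists2 t, t \in T & s \subset t.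
Proof.
rewrite /skel /simplices !inE => /andP[/andP[_ /existsP[t /andP[tT st]]] _].
by exists t.
Qed.


Lemma ext_cob g (u w : V) : u != w -> [set u; w] \in skel T 2 ->
  ext (cob g) [set u; w] = g u (+) g w.
Proof.
move=> uw hs; rewrite /ext; case: insubP => [e _ ev|]; last by rewrite hs.
rewrite ffunE ev.
rewrite (@sum_list _ [:: u; w]) ?big_cons ?big_nil ?addbF //= ?inE ?andbT //.
by move=> x; rewrite !inE.
Qed.

Lemma delta1_tri (x : cochain V) (a b c : V) : a != b -> b != c -> a != c ->
  [set a; b; c] \in skel T 3 ->
  delta1 T x [set a; b; c] = x [set a; b] (+) x [set b; c] (+) x [set a; c].
Proof.
move=> ab bc ac /skel_up [t tT ft].
have sub2 (u w : V) : u \in [set a; b; c] -> w \in [set a; b; c] -> u != w ->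
    [set u; w] \in skel T 2.
  move=> ua wa uw; apply: (skel_sub tT); last by rewrite cards2 uw.
    apply: subset_trans ft; by rewrite subUset !sub1set ua wa.
  by apply/set0Pn; exists u; rewrite !inE eqxx.
have ne (u : V) (A B : {set V}) : u \in A -> u \notin B -> A != B.
  by move=> uA uB; apply/negP => /eqP e; move: uB; rewrite -e uA.
have ul : uniq [:: [set a; b]; [set b; c]; [set a; c]].
  rewrite /= !inE !andbT negb_or -andbA; apply/and3P; split.
  - by apply: (ne a); rewrite !inE ?eqxx // negb_or ab.
  - by apply: (ne b); rewrite !inE ?eqxx ?orbT // negb_or eq_sym ab.
  - by apply: (ne b); rewrite !inE ?eqxx ?orbT // negb_or eq_sym ab.
rewrite /delta1 (eq_bigl (mem [:: [set a; b]; [set b; c]; [set a; c]])).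
  by rewrite -big_uniq // !big_cons big_nil; case: (x [set a; b]); case: (x [set b; c]); case: (x [set a; c]).
move=> e /=; apply/andP/idP.
  case=> /(skelP) [_ [_ /eqP /cards2P [y [z [yz ->]]]]].
  rewrite subUset !sub1set !inE => /andP[].
  by case/orP=> [/orP[]|] /eqP ? ; case/orP=> [/orP[]|] /eqP ?; subst;
    first [by rewrite eqxx in yz | by rewrite ?inE eqxx ?orbT | by rewrite setUC ?inE eqxx ?orbT].
rewrite !in_cons in_nil orbF => /or3P[] /eqP ->; split; first [by apply: sub2; rewrite ?inE ?eqxx ?orbT | by rewrite subUset !sub1set !inE !eqxx ?orbT].
Qed.

Lemma cocycle_tri (c : {ffun Edge T -> bool}) (a b d : V) : cocycle c ->
  a != b -> b != d -> a != d -> [set a; b; d] \in skel T 3 ->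
  ext c [set a; b] (+) ext c [set b; d] (+) ext c [set a; d] = false.
Proof.
move=> /forallP cc ab bd ad hf.
by have := implyP (cc _) hf; rewrite (delta1_tri _ ab bd ad hf) => /negbTE.
Qed.

Section Tet.
Variables (w0 w1 w2 w3 : V).
Hypotheses (h01 : ltr o w0 w1) (h02 : ltr o w0 w2) (h03 : ltr o w0 w3)
  (h12 : ltr o w1 w2) (h13 : ltr o w1 w3) (h23 : ltr o w2 w3).
Hypothesis tT : [set w0; w1; w2; w3] \in T.

Lemma ltr_neq u w : ltr o u w -> u != w. Proof. by case/and3P. Qed.

Lemma tet_edge u w : u \in [set w0; w1; w2; w3] -> w \in [set w0; w1; w2; w3] -> u != w ->
  [set u; w] \in skel T 2.
Proof.
move=> ut wt uw; apply: (skel_sub tT); last by rewrite cards2 uw.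
  by rewrite subUset !sub1set ut wt.
by apply/set0Pn; exists u; rewrite !inE eqxx.
Qed.

Lemma tet_tri u w z : u \in [set w0; w1; w2; w3] -> w \in [set w0; w1; w2; w3] ->
  z \in [set w0; w1; w2; w3] -> u != w -> w != z -> u != z ->
  [set u; w; z] \in skel T 3.
Proof.
move=> ut wt zt uw wz uz; apply: (skel_sub tT); last by rewrite cards3.
  by rewrite !subUset !sub1set ut wt zt.
by apply/set0Pn; exists u; rewrite !inE eqxx.
Qed.

Lemma sum4 (h : V -> bool) :
  \big[addb/false]_(x in [set w0; w1; w2; w3]) h x = h w0 (+) h w1 (+) h w2 (+) h w3.
Proof.
have [e1 f1 _ _] := ltr_facts h01; have [e2 f2 _ _] := ltr_facts h02.
have [e3 f3 _ _] := ltr_facts h03; have [e4 f4 _ _] := ltr_facts h12.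
have [e5 f5 _ _] := ltr_facts h13; have [e6 f6 _ _] := ltr_facts h23.
rewrite (@sum_list _ [:: w0; w1; w2; w3]) /=.
- rewrite !big_cons big_nil.
  by case: (h w0); case: (h w1); case: (h w2); case: (h w3).
- by rewrite !inE e1 e2 e3 e4 e5 e6.
- by move=> x; rewrite !inE !orbA.
Qed.

Lemma setD1_4 :
  [/\ [set w0; w1; w2; w3] :\ w0 = [set w1; w2; w3],
      [set w0; w1; w2; w3] :\ w1 = [set w0; w2; w3],
      [set w0; w1; w2; w3] :\ w2 = [set w0; w1; w3] &
      [set w0; w1; w2; w3] :\ w3 = [set w0; w1; w2]].
Proof.
have [e1 f1 _ _] := ltr_facts h01; have [e2 f2 _ _] := ltr_facts h02.
have [e3 f3 _ _] := ltr_facts h03; have [e4 f4 _ _] := ltr_facts h12.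
have [e5 f5 _ _] := ltr_facts h13; have [e6 f6 _ _] := ltr_facts h23.
split; apply/setP=> x; rewrite !inE;
  (case: (eqVneq x w0) => [ex|_]; first by rewrite ?ex ?eqxx ?e1 ?e2 ?e3 ?e4 ?e5 ?e6 ?f1 ?f2 ?f3 ?f4 ?f5 ?f6 ?orbF);
  (case: (eqVneq x w1) => [ex|_]; first by rewrite ?ex ?eqxx ?e1 ?e2 ?e3 ?e4 ?e5 ?e6 ?f1 ?f2 ?f3 ?f4 ?f5 ?f6 ?orbF);
  (case: (eqVneq x w2) => [ex|_]; first by rewrite ?ex ?eqxx ?e1 ?e2 ?e3 ?e4 ?e5 ?e6 ?f1 ?f2 ?f3 ?f4 ?f5 ?f6 ?orbF);
  (case: (eqVneq x w3) => [ex|_]; first by rewrite ?ex ?eqxx ?e1 ?e2 ?e3 ?e4 ?e5 ?e6 ?f1 ?f2 ?f3 ?f4 ?f5 ?f6 ?orbF);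
  by rewrite ?orbF.
Qed.
End Tet.

Lemma bool1 g0 g1 b01 b12 b02 c12 c23 c13 :
  b01 (+) b12 (+) b02 = false -> c12 (+) c23 (+) c13 = false ->
  [&& g0 (+) g1, b12 & c23] = [&& g1, b12 & c23] (+) [&& g0, b02 & c23]
     (+) [&& g0, b01 & c13] (+) [&& g0, b01 & c12].
Proof. by case: g0; case: g1; case: b01; case: b12; case: b02; case: c12; case: c23; case: c13. Qed.

Lemma bool2 g1 g2 a01 a12 a02 c12 c23 c13 :
  a01 (+) a12 (+) a02 = false -> c12 (+) c23 (+) c13 = false ->
  [&& a01, g1 (+) g2 & c23] = [&& a12, g2 & c23] (+) [&& a02, g2 & c23]
     (+) [&& a01, g1 & c13] (+) [&& a01, g1 & c12].
Proof. by case: g1; case: g2; case: a01; case: a12; case: a02; case: c12; case: c23; case: c13. Qed.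

Lemma bool3 g2 g3 a01 a12 a02 b12 b23 b13 :
  a01 (+) a12 (+) a02 = false -> b12 (+) b23 (+) b13 = false ->
  [&& a01, b12 & g2 (+) g3] = [&& a12, b23 & g3] (+) [&& a02, b23 & g3]
     (+) [&& a01, b13 & g3] (+) [&& a01, b12 & g2].
Proof. by case: g2; case: g3; case: a01; case: a12; case: a02; case: b12; case: b23; case: b13. Qed.

Definition vg (g : V -> bool) (f : {set V}) k := if vtx o f k is Some v then g v else false.
Definition om1 g (b c : {ffun Edge T -> bool}) f :=
  [&& vg g f 0, ext b (face o f [:: 0; 1]) & ext c (face o f [:: 1; 2])].
Definition om2 g (a c : {ffun Edge T -> bool}) f :=
  [&& ext a (face o f [:: 0; 1]), vg g f 1 & ext c (face o f [:: 1; 2])].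
Definition om3 g (a b : {ffun Edge T -> bool}) f :=
  [&& ext a (face o f [:: 0; 1]), ext b (face o f [:: 1; 2]) & vg g f 2].

Section OmTri.
Variables (u w z : V).
Hypotheses (huw : ltr o u w) (hwz : ltr o w z) (huz : ltr o u z).
Variables (g : V -> bool) (a b : {ffun Edge T -> bool}).
Lemma om1_tri : om1 g a b [set u; w; z] = [&& g u, ext a [set u; w] & ext b [set w; z]].
Proof. by rewrite /om1 /vg tri_vtx // tri_face01 // tri_face12. Qed.
Lemma om2_tri : om2 g a b [set u; w; z] = [&& ext a [set u; w], g w & ext b [set w; z]].
Proof. by rewrite /om2 /vg tri_vtx // tri_face01 // tri_face12. Qed.
Lemma om3_tri : om3 g a b [set u; w; z] = [&& ext a [set u; w], ext b [set w; z] & g z].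
Proof. by rewrite /om3 /vg tri_vtx // tri_face01 // tri_face12. Qed.
End OmTri.

Ltac tin := rewrite !inE ?eqxx ?orbT.
Ltac nq h := exact: (ltr_neq h).

Lemma cob1 g b c : cocycle b -> cocycle c -> F (cob g) b c = false.
Proof.
move=> cb cc; rewrite /F /integral; apply: etrans (closed_sum hM (om1 g b c)); apply: eq_bigr => t tT.
have [w0 [w1 [w2 [w3 [et /and5P[h01 h02 h03 h12 /andP[h13 h23]]]]]]] := tet_order hM hbr tT.
rewrite et in tT *.
have [d0 d1 d2 d3] := setD1_4 h01 h02 h03 h12 h13 h23.
rewrite tet_cup3 // sum4 // d0 d1 d2 d3.
rewrite (om1_tri h12 h23 h13) (om1_tri h02 h23 h03) (om1_tri h01 h13 h03) (om1_tri h01 h12 h02).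
rewrite (ext_cob g (ltr_neq h01)); last by apply: (tet_edge tT); rewrite ?inE ?eqxx ?orbT ?(ltr_neq h01).
apply: bool1.
  apply: cocycle_tri => //; try exact: (ltr_neq h01); try exact: (ltr_neq h12); try exact: (ltr_neq h02).
  by apply: (tet_tri tT); rewrite ?inE ?eqxx ?orbT ?(ltr_neq h01) ?(ltr_neq h12) ?(ltr_neq h02).
apply: cocycle_tri => //; try exact: (ltr_neq h12); try exact: (ltr_neq h23); try exact: (ltr_neq h13).
by apply: (tet_tri tT); rewrite ?inE ?eqxx ?orbT ?(ltr_neq h12) ?(ltr_neq h23) ?(ltr_neq h13).
Qed.
Lemma cob2 g a c : cocycle a -> cocycle c -> F a (cob g) c = false.
Proof.
move=> ca cc; rewrite /F /integral; apply: etrans (closed_sum hM (om2 g a c)); apply: eq_bigr => t tT.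
have [w0 [w1 [w2 [w3 [et /and5P[h01 h02 h03 h12 /andP[h13 h23]]]]]]] := tet_order hM hbr tT.
rewrite et in tT *.
have [d0 d1 d2 d3] := setD1_4 h01 h02 h03 h12 h13 h23.
rewrite tet_cup3 // sum4 // d0 d1 d2 d3.
rewrite (om2_tri h12 h23 h13) (om2_tri h02 h23 h03) (om2_tri h01 h13 h03) (om2_tri h01 h12 h02).
rewrite (ext_cob g (ltr_neq h12)); last by apply: (tet_edge tT); rewrite ?inE ?eqxx ?orbT ?(ltr_neq h12).
apply: bool2.
  apply: cocycle_tri => //; try exact: (ltr_neq h01); try exact: (ltr_neq h12); try exact: (ltr_neq h02).
  by apply: (tet_tri tT); rewrite ?inE ?eqxx ?orbT ?(ltr_neq h01) ?(ltr_neq h12) ?(ltr_neq h02).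
apply: cocycle_tri => //; try exact: (ltr_neq h12); try exact: (ltr_neq h23); try exact: (ltr_neq h13).
by apply: (tet_tri tT); rewrite ?inE ?eqxx ?orbT ?(ltr_neq h12) ?(ltr_neq h23) ?(ltr_neq h13).
Qed.

Lemma cob3 g a b : cocycle a -> cocycle b -> F a b (cob g) = false.
Proof.
move=> ca cb; rewrite /F /integral; apply: etrans (closed_sum hM (om3 g a b)); apply: eq_bigr => t tT.
have [w0 [w1 [w2 [w3 [et /and5P[h01 h02 h03 h12 /andP[h13 h23]]]]]]] := tet_order hM hbr tT.
rewrite et in tT *.
have [d0 d1 d2 d3] := setD1_4 h01 h02 h03 h12 h13 h23.
rewrite tet_cup3 // sum4 // d0 d1 d2 d3.
rewrite (om3_tri h12 h23 h13) (om3_tri h02 h23 h03) (om3_tri h01 h13 h03) (om3_tri h01 h12 h02).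
rewrite (ext_cob g (ltr_neq h23)); last by apply: (tet_edge tT); rewrite ?inE ?eqxx ?orbT ?(ltr_neq h23).
apply: bool3.
  apply: cocycle_tri => //; try exact: (ltr_neq h01); try exact: (ltr_neq h12); try exact: (ltr_neq h02).
  by apply: (tet_tri tT); rewrite ?inE ?eqxx ?orbT ?(ltr_neq h01) ?(ltr_neq h12) ?(ltr_neq h02).
apply: cocycle_tri => //; try exact: (ltr_neq h12); try exact: (ltr_neq h23); try exact: (ltr_neq h13).
by apply: (tet_tri tT); rewrite ?inE ?eqxx ?orbT ?(ltr_neq h12) ?(ltr_neq h23) ?(ltr_neq h13).
Qed.


Lemma andb_addL x y z : (x (+) y) && z = (x && z) (+) (y && z).
Proof. by case: x; case: y; case: z. Qed.
Lemma andb_addR x y z : x && (y (+) z) = (x && y) (+) (x && z).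
Proof. by case: x; case: y; case: z. Qed.

Lemma F_add1 a a' b c : F (addf a a') b c = F a b c (+) F a' b c.
Proof.
rewrite /F /integral -big_split; apply: eq_bigr => t _.
by rewrite /cup3 /cup !ext_add !andb_addL.
Qed.
Lemma F_add2 a b b' c : F a (addf b b') c = F a b c (+) F a b' c.
Proof.
rewrite /F /integral -big_split; apply: eq_bigr => t _.
by rewrite /cup3 /cup !ext_add andb_addR andb_addL.
Qed.
Lemma F_add3 a b c c' : F a b (addf c c') = F a b c (+) F a b c'.
Proof.
rewrite /F /integral -big_split; apply: eq_bigr => t _.
by rewrite /cup3 /cup !ext_add andb_addR.
Qed.

Variables (nb : nat) (B : 'I_nb -> {ffun Edge T -> bool}).

Lemma ext_lin n s : ext (lincomb B n) s = \big[addb/false]_(k < nb) (n k && ext (B k) s).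
Proof.
rewrite /ext; case: insub => [e|] /=; first by rewrite ffunE.
by rewrite big1 // => k _; rewrite andbF.
Qed.

Lemma F_lin1 n b c : F (lincomb B n) b c = \big[addb/false]_(k < nb) (n k && F (B k) b c).
Proof.
rewrite /F /integral.
under [RHS]eq_bigr => k _ do rewrite big_distrr.
rewrite exchange_big; apply: eq_bigr => t _.
rewrite /cup3 /cup ext_lin !big_distrl; apply: eq_bigr => k _ /=.
by rewrite !andbA.
Qed.
Lemma F_lin2 n a c : F a (lincomb B n) c = \big[addb/false]_(k < nb) (n k && F a (B k) c).
Proof.
rewrite /F /integral.
under [RHS]eq_bigr => k _ do rewrite big_distrr.
rewrite exchange_big; apply: eq_bigr => t _.
rewrite /cup3 /cup ext_lin big_distrr big_distrl; apply: eq_bigr => k _ /=.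
by case: (n k); case: (ext a _); case: (ext (B k) _); case: (ext c _).
Qed.
Lemma F_lin3 n a b : F a b (lincomb B n) = \big[addb/false]_(k < nb) (n k && F a b (B k)).
Proof.
rewrite /F /integral.
under [RHS]eq_bigr => k _ do rewrite big_distrr.
rewrite exchange_big; apply: eq_bigr => t _.
rewrite /cup3 /cup ext_lin big_distrr; apply: eq_bigr => k _ /=.
by case: (n k); case: (ext a _); case: (ext b _); case: (ext (B k) _).
Qed.

Local Open Scope ring_scope.

Lemma tet_gate_eq t (psi : state T) x : t \in T ->
  tet_gate o t psi x =
  (-1) ^+ cup3 o (ext (x c1)) (ext (x c2)) (ext (x c3)) t * psi x.
Proof.
move=> tT.
have [w0 [w1 [w2 [w3 [et /and5P[h01 h02 h03 h12 /andP[h13 h23]]]]]]] := tet_order hM hbr tT.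
rewrite et tet_cup3 // /tet_gate tet_face01 // tet_face12 // tet_face23 // /ext.
case: (insub [set w0; w1] : option (Edge T)) => [e1|]; last by rewrite /= expr0 mul1r.
case: (insub [set w1; w2] : option (Edge T)) => [e2|]; last by rewrite andbF /= expr0 mul1r.
case: (insub [set w2; w3] : option (Edge T)) => [e3|]; last by rewrite !andbF /= expr0 mul1r.
by [].
Qed.

Lemma Ucirc_eq (psi : state T) x :
  Ucirc o psi x = (-1) ^+ F (x c1) (x c2) (x c3) * psi x.
Proof.
rewrite /Ucirc /F /integral -big_enum.
have : all (mem T) (enum T) by apply/allP=> t; rewrite mem_enum.
elim: (enum T) => [|t l IH] /=; first by rewrite big_nil expr0 mul1r.
case/andP=> tT /IH {}IH.
by rewrite big_cons tet_gate_eq // IH mulrA -signr_addb.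
Qed.

Lemma neg_self (a : algC) : (-1) * a = a -> a = 0.
Proof.
rewrite mulN1r => /eqP; rewrite eq_sym -subr_eq0 opprK -mulr2n mulrn_eq0 /=.
by move/eqP.
Qed.

Lemma code_cocycle (psi : state T) x i : in_code psi -> psi x != 0 -> cocycle (x i).
Proof.
case=> _ hZ nz; apply/forallP => f; apply/implyP => hf; apply/negP => hd.
have := hZ i f hf x; rewrite /Zstab hd expr1 => /neg_self e.
by rewrite e eqxx in nz.
Qed.

Lemma sum_eq1 (A : {set V}) v : \big[addb/false]_(u in A) (u == v) = (v \in A).
Proof.
case: (boolP (v \in A)) => vA.
  rewrite (bigD1 v) //= eqxx big1 // => u /andP[_ /negbTE] -> //.
by apply: big1 => u uA; apply/negbTE; apply: contraNneq vA => <-.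
Qed.

Lemma flipE x i v j : flip x i v j = if j == i then addf (x j) (cob (pred1 v)) else x j.
Proof.
rewrite /flip ffunE; case: (j == i) => //.
by apply/ffunP => e; rewrite !ffunE sum_eq1.
Qed.

Lemma in_code_U (psi : state T) : in_code psi -> in_code (Ucirc o psi).
Proof.
move=> hc; have [hX hZ] := hc; split.
  move=> i v hv x; rewrite /Xstab !Ucirc_eq.
  have := hX i v hv x; rewrite /Xstab => ->.
  have [->|nz] := eqVneq (psi x) 0; first by rewrite !mulr0.
  have cc j := code_cocycle j hc nz.
  congr (_ ^+ _ * _).
  have : i = c1 \/ i = c2 \/ i = c3.
    case: i => [[|[|[|m]]] hm]; [left|right;left|right;right|by []]; exact: val_inj.
  case=> [->|[->|->]]; rewrite !flipE /=.
  - by rewrite F_add1 cob1 ?addbF.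
  - by rewrite F_add2 cob2 ?addbF.
  - by rewrite F_add3 cob3 ?addbF.
move=> i f hf x; rewrite /Zstab !Ucirc_eq mulrCA.
by have := hZ i f hf x; rewrite /Zstab => ->.
Qed.

Lemma Lprod_eq (psi : state T) x : Lprod o B psi x =
  (-1) ^+ (\big[addb/false]_(abg <- enum {: 'I_nb * 'I_nb * 'I_nb})
     (triple o B abg && [&& Defs.coord B (x c1) abg.1.1, Defs.coord B (x c2) abg.1.2
                     & Defs.coord B (x c3) abg.2])) * psi x.
Proof.
rewrite /Lprod.
elim: (enum _) => [|abg l IH] /=; first by rewrite big_nil expr0 mul1r.
rewrite big_cons signr_addb -mulrA -IH.
case: (triple o B abg) => /=; last by rewrite expr0 mul1r.
by [].
Qed.

Hypothesis hB : H1basis B.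

Lemma cocycle_lin n : cocycle (lincomb B n).
Proof.
case: hB => hB1 _; apply/forallP => f; apply/implyP => hf.
rewrite /delta1.
under eq_bigr => e _ do rewrite ext_lin.
rewrite exchange_big big1 // => k _.
rewrite -big_distrr /=.
by have := implyP (forallP (hB1 k) f) hf => /negbTE; rewrite /delta1 => ->; rewrite andbF.
Qed.

Lemma coh_decomp c : cocycle c -> exists g, c = addf (lincomb B (Defs.coord B c)) (cob g).
Proof.
move=> cc.
have : cohomologous c (lincomb B (Defs.coord B c)).
  rewrite /Defs.coord; case: pickP => [n hn //| none].
  case: hB => _ /(_ c cc) [n [hn _]].
  by have := none n; rewrite hn.
case/existsP => g /forallP hg; exists g; apply/ffunP => e.
by rewrite !ffunE -(eqP (hg e)) ffunE; case: (c e); case: (\big[addb/false]_(k < nb) _).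
Qed.

Lemma U_eq_L (psi : state T) : in_code psi -> forall x, Ucirc o psi x = Lprod o B psi x.
Proof.
move=> hc x; rewrite Ucirc_eq Lprod_eq.
have [->|nz] := eqVneq (psi x) 0; first by rewrite !mulr0.
congr (_ ^+ _ * _); congr (nat_of_bool _).
have cc j := code_cocycle j hc nz.
set n1 := Defs.coord B (x c1); set n2 := Defs.coord B (x c2); set n3 := Defs.coord B (x c3).
have [g1 e1] := coh_decomp (cc c1); have [g2 e2] := coh_decomp (cc c2).
have [g3 e3] := coh_decomp (cc c3).
rewrite -/n1 in e1; rewrite -/n2 in e2; rewrite -/n3 in e3.
rewrite {1}e1 F_add1 (cob1 g1 (cc c2) (cc c3)) addbF.
rewrite {1}e2 F_add2 (cob2 g2 (cocycle_lin n1) (cc c3)) addbF.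
rewrite {1}e3 F_add3 (cob3 g3 (cocycle_lin n1) (cocycle_lin n2)) addbF.
transitivity (\big[addb/false]_a \big[addb/false]_b \big[addb/false]_g
   (n1 a && (n2 b && (n3 g && F (B a) (B b) (B g))))).
  rewrite F_lin1; apply: eq_bigr => a _; rewrite F_lin2 big_distrr; apply: eq_bigr => b _.
  by rewrite F_lin3 !big_distrr.
rewrite pair_bigA pair_bigA big_enum; apply: eq_bigr => [[[a b] g]] _ /=.
rewrite /triple /=.
by rewrite /F; case: (n1 a); case: (n2 b); case: (n3 g); rewrite ?andbF ?andbT.
Qed.
End Main.

Unset Implicit Arguments.

Theorem mainTheorem2 (V : finType) (T : {set {set V}}) (o : rel V)
  (hM : closed3manifold T) (hbr : branching T o)
  (nb : nat) (B : 'I_nb -> {ffun Edge T -> bool}) (hB : H1basis B) :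
  (forall (psi : state T) (x : config T),
     Ucirc o psi x =
     ((-1) ^+ integral T (cup3 o (ext (x c1)) (ext (x c2)) (ext (x c3))) * psi x)%R)
  /\ (forall psi : state T, in_code psi -> in_code (Ucirc o psi))
  /\ (forall psi : state T, in_code psi ->
        forall x : config T, Ucirc o psi x = Lprod o B psi x).
Proof.
split; first by move=> psi x; exact: (Ucirc_eq hM hbr).
split; first by move=> psi; exact: (in_code_U hM hbr).
move=> psi hc x; exact: (U_eq_L hM hbr hB hc).
Qed.
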